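(* Let $ABC$ be a triangle with incenter $I$ and Bevan point $B_e$. Let $A', B', C'$ be the feet of the perpendiculars from $B_e$ to $AI, BI, CI$ respectively. Then the orthocenter of triangle $A'B'C'$ coincides with the Nagel point of $ABC$.
   Context: The Bevan point $B_e$ of $ABC$ is the circumcenter of the excentral triangle $I_AI_BI_C$ (the triangle formed by the three excenters of $ABC$). The Nagel point of $ABC$ is the common point of the lines joining each vertex to the point where the corresponding excircle touches the opposite side. *)

(* Defs.v *)
From mathcomp Require Import all_boot all_order all_algebra.
Set Implicit Arguments. Unset Strict Implicit. Unset Printing Implicit Defensive.
Import Order.TTheory GRing.Theory Num.Theory.
Local Open Scope ring_scope.

Definition pt (R : rcfType) := (R * R)%type.

Section Geo.
Variable R : rcfType.

Definition padd (P Q : pt R) : pt R := (P.1 + Q.1, P.2 + Q.2).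
Definition psub (P Q : pt R) : pt R := (P.1 - Q.1, P.2 - Q.2).
Definition pscale (k : R) (P : pt R) : pt R := (k * P.1, k * P.2).
Definition dot (P Q : pt R) : R := P.1 * Q.1 + P.2 * Q.2.
Definition cross (P Q : pt R) : R := P.1 * Q.2 - P.2 * Q.1.
Definition dist (P Q : pt R) : R := Num.sqrt (dot (psub P Q) (psub P Q)).

Definition triangle_nondeg (A B C : pt R) : Prop := cross (psub B A) (psub C A) != 0.

(* X lies on the line through P and Q (P <> Q assumed where used) *)
Definition on_line (X P Q : pt R) : Prop := cross (psub Q P) (psub X P) = 0.

Definition bary (wA wB wC : R) (A B C : pt R) : pt R :=
  pscale (wA + wB + wC)^-1 (padd (pscale wA A) (padd (pscale wB B) (pscale wC C))).

Definition incenter (A B C : pt R) : pt R :=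
  bary (dist B C) (dist C A) (dist A B) A B C.
Definition excenterA (A B C : pt R) : pt R :=
  bary (- dist B C) (dist C A) (dist A B) A B C.
Definition excenterB (A B C : pt R) : pt R :=
  bary (dist B C) (- dist C A) (dist A B) A B C.
Definition excenterC (A B C : pt R) : pt R :=
  bary (dist B C) (dist C A) (- dist A B) A B C.

Definition is_circumcenter (O P Q S : pt R) : Prop :=
  dist O P = dist O Q /\ dist O Q = dist O S.

Definition is_bevan_point (Be A B C : pt R) : Prop :=
  is_circumcenter Be (excenterA A B C) (excenterB A B C) (excenterC A B C).

(* foot of the perpendicular from X to the line PQ (P <> Q) *)
Definition foot (X P Q : pt R) : pt R :=
  padd P (pscale (dot (psub X P) (psub Q P) / dot (psub Q P) (psub Q P)) (psub Q P)).

Definition extouchA (A B C : pt R) : pt R := foot (excenterA A B C) B C.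
Definition extouchB (A B C : pt R) : pt R := foot (excenterB A B C) C A.
Definition extouchC (A B C : pt R) : pt R := foot (excenterC A B C) A B.

Definition is_nagel_point (N A B C : pt R) : Prop :=
  [/\ on_line N A (extouchA A B C), on_line N B (extouchB A B C)
    & on_line N C (extouchC A B C)].

Definition is_orthocenter (H P Q S : pt R) : Prop :=
  [/\ dot (psub H P) (psub Q S) = 0, dot (psub H Q) (psub S P) = 0
    & dot (psub H S) (psub P Q) = 0].

End Geo.

(* Main.v *)
Require Import Defs.
From mathcomp Require Import all_boot all_order all_algebra.
From mathcomp Require Import ring lra.
Set Implicit Arguments. Unset Strict Implicit. Unset Printing Implicit Defensive.
Import Order.TTheory GRing.Theory Num.Theory.
Local Open Scope ring_scope.

Definition ac (R : rcfType) (A B C : pt R) (y z : R) : pt R :=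
  (A.1 + y*(B.1-A.1) + z*(C.1-A.1), A.2 + y*(B.2-A.2) + z*(C.2-A.2)).

Definition Qf (R : rcfType) (a b c dy dz ey ez : R) : R :=
  dy*ey*c^+2 + (dy*ez+dz*ey)*(b^+2+c^+2-a^+2)/2 + dz*ez*b^+2.

Lemma dot_ac (R : rcfType) (A B C P Q S T : pt R) (a b c y1 z1 y2 z2 y3 z3 y4 z4 : R) :
  a^+2 = dot (psub B C) (psub B C) -> b^+2 = dot (psub C A) (psub C A) ->
  c^+2 = dot (psub A B) (psub A B) ->
  P = ac A B C y1 z1 -> Q = ac A B C y2 z2 -> S = ac A B C y3 z3 -> T = ac A B C y4 z4 ->
  dot (psub P Q) (psub S T) = Qf a b c (y1-y2) (z1-z2) (y3-y4) (z3-z4).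
Proof.
move=> ha hb hc -> -> -> ->; rewrite /Qf ha hb hc.
case: A B C {ha hb hc} => [xa ya] [xb yb] [xc yc].
rewrite /dot /psub /ac /=. field. by [].
Qed.

Lemma cross_ac (R : rcfType) (A B C P Q S T : pt R) (y1 z1 y2 z2 y3 z3 y4 z4 : R) :
  P = ac A B C y1 z1 -> Q = ac A B C y2 z2 -> S = ac A B C y3 z3 -> T = ac A B C y4 z4 ->
  cross (psub P Q) (psub S T) = ((y1-y2)*(z3-z4) - (z1-z2)*(y3-y4)) * cross (psub B A) (psub C A).
Proof.
move=> -> -> -> ->.
case: A B C => [xa ya] [xb yb] [xc yc].
rewrite /cross /psub /ac /=. ring.
Qed.

Lemma bary_ac (R : rcfType) (A B C : pt R) (x y z : R) : x + y + z != 0 ->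
  bary x y z A B C = ac A B C (y/(x+y+z)) (z/(x+y+z)).
Proof.
move=> h.
case: A B C => [xa ya] [xb yb] [xc yc].
rewrite /bary /pscale /padd /ac /=. congr pair; field; exact: h.
Qed.

Lemma foot_ac (R : rcfType) (A B C X P Q : pt R) (y2 z2 y3 z3 : R) :
  P = ac A B C y2 z2 -> Q = ac A B C y3 z3 ->
  foot X P Q = ac A B C
    (y2 + dot (psub X P) (psub Q P) / dot (psub Q P) (psub Q P) * (y3-y2))
    (z2 + dot (psub X P) (psub Q P) / dot (psub Q P) (psub Q P) * (z3-z2)).
Proof.
move=> hP hQ; rewrite /foot.
set t := dot (psub X P) (psub Q P) / dot (psub Q P) (psub Q P); clearbody t.
rewrite hP hQ.
case: A B C {hP hQ} => [xa ya] [xb yb] [xc yc].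
rewrite /pscale /padd /psub /ac /=. congr pair; ring.
Qed.

Lemma any_ac (R : rcfType) (A B C X : pt R) : cross (psub B A) (psub C A) != 0 ->
  X = ac A B C (cross (psub X A) (psub C A) / cross (psub B A) (psub C A))
               (cross (psub B A) (psub X A) / cross (psub B A) (psub C A)).
Proof.
case: A B C X => [xa ya] [xb yb] [xc yc] [x y].
rewrite /cross /psub /ac /= => h. congr pair; field; exact: h.
Qed.

Lemma acA (R : rcfType) (A B C : pt R) : A = ac A B C 0 0.
Proof. case: A => ? ?; rewrite /ac /=; congr pair; ring. Qed.
Lemma acB (R : rcfType) (A B C : pt R) : B = ac A B C 1 0.
Proof. case: A B => ? ? [? ?]; rewrite /ac /=; congr pair; ring. Qed.
Lemma acC (R : rcfType) (A B C : pt R) : C = ac A B C 0 1.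
Proof. case: A C => ? ? [? ?]; rewrite /ac /=; congr pair; ring. Qed.

Lemma perp_diff (R : rcfType) (X Y P Q : pt R) :
  dot (psub X P) (psub X P) = dot (psub X Q) (psub X Q) ->
  dot (psub Y P) (psub Y P) = dot (psub Y Q) (psub Y Q) ->
  dot (psub X Y) (psub P Q) = 0.
Proof.
move=> h1 h2.
have e : dot (psub X Y) (psub P Q) * 2 =
  (dot (psub X Q) (psub X Q) - dot (psub X P) (psub X P)) -
  (dot (psub Y Q) (psub Y Q) - dot (psub Y P) (psub Y P)).
  rewrite /dot /psub /=; ring.
move: e; rewrite h1 h2 !subrr ?subr0 => /eqP; rewrite mulf_eq0 pnatr_eq0 orbF => /eqP //.
Qed.

Lemma uniq_dot (R : rcfType) (X Y p q : pt R) :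
  dot (psub X Y) p = 0 -> dot (psub X Y) q = 0 -> cross p q != 0 -> X = Y.
Proof.
case: X Y p q => [x1 x2] [y1 y2] [p1 p2] [q1 q2]; rewrite /dot /cross /psub /= => h1 h2 h.
have e1 : (x1 - y1) * (p1*q2 - p2*q1) = q2 * ((x1 - y1) * p1 + (x2 - y2) * p2) - p2 * ((x1 - y1) * q1 + (x2 - y2) * q2) by ring.
have e2 : (x2 - y2) * (p1*q2 - p2*q1) = p1 * ((x1 - y1) * q1 + (x2 - y2) * q2) - q1 * ((x1 - y1) * p1 + (x2 - y2) * p2) by ring.
rewrite h1 h2 !mulr0 subr0 in e1 e2.
move/eqP: e1; rewrite mulf_eq0 (negbTE h) orbF subr_eq0 => /eqP ->.
move/eqP: e2; rewrite mulf_eq0 (negbTE h) orbF subr_eq0 => /eqP -> //.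
Qed.

Lemma uniq_cross (R : rcfType) (X Y p q : pt R) :
  cross p (psub X Y) = 0 -> cross q (psub X Y) = 0 -> cross p q != 0 -> X = Y.
Proof.
case: X Y p q => [x1 x2] [y1 y2] [p1 p2] [q1 q2]; rewrite /dot /cross /psub /= => h1 h2 h.
have e1 : (x1 - y1) * (p1*q2 - p2*q1) = q1 * (p1 * (x2 - y2) - p2 * (x1 - y1)) - p1 * (q1 * (x2 - y2) - q2 * (x1 - y1)) by ring.
have e2 : (x2 - y2) * (p1*q2 - p2*q1) = q2 * (p1 * (x2 - y2) - p2 * (x1 - y1)) - p2 * (q1 * (x2 - y2) - q2 * (x1 - y1)) by ring.
rewrite h1 h2 !mulr0 subr0 in e1 e2.
move/eqP: e1; rewrite mulf_eq0 (negbTE h) orbF subr_eq0 => /eqP ->.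
move/eqP: e2; rewrite mulf_eq0 (negbTE h) orbF subr_eq0 => /eqP -> //.
Qed.

Lemma cross_sub (R : rcfType) (p X Y Z : pt R) :
  cross p (psub X Z) = 0 -> cross p (psub Y Z) = 0 -> cross p (psub X Y) = 0.
Proof.
move=> h1 h2; have e : cross p (psub X Y) = cross p (psub X Z) - cross p (psub Y Z).
  rewrite /cross /psub /=; ring.
by rewrite e h1 h2 subrr.
Qed.

Lemma dot_ge0 (R : rcfType) (P : pt R) : 0 <= dot P P.
Proof. rewrite /dot; nra. Qed.

Lemma tri_ineq (R : rcfType) (a b c uv D : R) : 0 < a -> 0 < b -> 0 < c ->
  a^+2 = b^+2 + c^+2 - 2 * uv -> b^+2 * c^+2 = uv^+2 + D^+2 -> D != 0 -> a < b + c.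
Proof.
move=> ha hb hc e1 e2 hD.
have hD2 : 0 < D^+2 by rewrite exprn_even_gt0.
have hbc : 0 < b * c by rewrite mulr_gt0.
have h1 : - uv < b * c.
  case: (lerP 0 uv) => hu; first by lra.
  have : (- uv)^+2 < (b*c)^+2 by rewrite sqrrN exprMn e2; lra.
  by rewrite ltr_pXn2r // ?nnegrE; lra.
have h2 : a^+2 < (b + c)^+2 by rewrite e1; nra.
by move: h2; rewrite ltr_pXn2r // ?nnegrE; lra.
Qed.

Ltac fs := field; repeat (apply/andP; split); try assumption; rewrite ?pnatr_eq0 ?mulf_neq0 ?invr_neq0 //; done.

Theorem proposition4p1 (R : rcfType) (A B C Be N : pt R) :
  triangle_nondeg A B C ->
  is_bevan_point Be A B C ->
  is_nagel_point N A B C ->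
  let I := incenter A B C in
  is_orthocenter N (foot Be A I) (foot Be B I) (foot Be C I).
Proof.
move=> hnd [hBe1 hBe2] [hN1 hN2 _] I.
rewrite /triangle_nondeg in hnd.
set D := cross (psub B A) (psub C A) in hnd.
have ha : (dist B C)^+2 = dot (psub B C) (psub B C) by rewrite sqr_sqrtr // dot_ge0.
have hb : (dist C A)^+2 = dot (psub C A) (psub C A) by rewrite sqr_sqrtr // dot_ge0.
have hc : (dist A B)^+2 = dot (psub A B) (psub A B) by rewrite sqr_sqrtr // dot_ge0.
have a0 : 0 <= dist B C by rewrite sqrtr_ge0.
have b0 : 0 <= dist C A by rewrite sqrtr_ge0.
have c0 : 0 <= dist A B by rewrite sqrtr_ge0.
rewrite /I /incenter in hBe1 hBe2 *.
rewrite /extouchA /extouchB /excenterA /excenterB in hN1 hN2.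
rewrite /is_bevan_point /excenterA /excenterB /excenterC in hBe1 hBe2 *.
move: ha hb hc a0 b0 c0 hBe1 hBe2 hN1 hN2.
set a := dist B C; set b := dist C A; set c := dist A B => ha hb hc a0 b0 c0 hBe1 hBe2 hN1 hN2.
have hD2 : 0 < D^+2 by rewrite exprn_even_gt0.
have L1 : a^+2 * b^+2 = (dot (psub B C) (psub A C))^+2 + D^+2.
  by rewrite ha hb /D /dot /cross /psub /=; ring.
have L2 : b^+2 * c^+2 = (dot (psub B A) (psub C A))^+2 + D^+2.
  by rewrite hb hc /D /dot /cross /psub /=; ring.
have L3 : c^+2 * a^+2 = (dot (psub A B) (psub C B))^+2 + D^+2.
  by rewrite hc ha /D /dot /cross /psub /=; ring.
have ap : 0 < a.
  rewrite lt0r a0 andbT -sqrf_eq0; apply/eqP => h0; move: L1; rewrite h0 mul0r.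
  set u := dot _ _; nra.
have bp : 0 < b.
  rewrite lt0r b0 andbT -sqrf_eq0; apply/eqP => h0; move: L2; rewrite h0 mul0r.
  set u := dot _ _; nra.
have cp : 0 < c.
  rewrite lt0r c0 andbT -sqrf_eq0; apply/eqP => h0; move: L3; rewrite h0 mul0r.
  set u := dot _ _; nra.
have t1 : a < b + c.
  apply: (tri_ineq ap bp cp _ L2 hnd).
  by rewrite ha hb hc /dot /psub /=; ring.
have t2 : b < c + a.
  apply: (tri_ineq bp cp ap _ L3 hnd).
  by rewrite ha hb hc /dot /psub /=; ring.
have t3 : c < a + b.
  apply: (tri_ineq cp ap bp _ L1 hnd).
  by rewrite ha hb hc /dot /psub /=; ring.
clearbody a b c.
have nz : forall x : R, 0 < x -> x != 0 by move=> x hx; rewrite gt_eqF.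
have s0 : a + b + c != 0 by apply: nz; lra.
have e1 : - a + b + c != 0 by apply: nz; lra.
have e2 : a + - b + c != 0 by apply: nz; lra.
have e3 : a + b + - c != 0 by apply: nz; lra.
have a0' := nz _ ap; have b0' := nz _ bp; have c0' := nz _ cp.
have hI := bary_ac A B C s0.
have hIA := bary_ac A B C e1.
have hIB := bary_ac A B C e2.
have hIC := bary_ac A B C e3.
have S0 : a^+2*(b^+2+c^+2-a^+2) + b^+2*(c^+2+a^+2-b^+2) + c^+2*(a^+2+b^+2-c^+2) != 0.
  have -> : a^+2*(b^+2+c^+2-a^+2) + b^+2*(c^+2+a^+2-b^+2) + c^+2*(a^+2+b^+2-c^+2) = 4 * D^+2.
    by rewrite ha hb hc /D /dot /cross /psub /=; ring.
  by rewrite mulf_neq0 // ?pnatr_eq0 // gt_eqF.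
pose S := a^+2*(b^+2+c^+2-a^+2) + b^+2*(c^+2+a^+2-b^+2) + c^+2*(a^+2+b^+2-c^+2).
pose yb := 2*b^+2*(c^+2+a^+2-b^+2)/S - b/(a+b+c).
pose zb := 2*c^+2*(a^+2+b^+2-c^+2)/S - c/(a+b+c).
have Bs1 : dot (psub (ac A B C yb zb) (bary (- a) b c A B C)) (psub (ac A B C yb zb) (bary (- a) b c A B C))
   = dot (psub (ac A B C yb zb) (bary a (- b) c A B C)) (psub (ac A B C yb zb) (bary a (- b) c A B C)).
  rewrite (dot_ac ha hb hc erefl hIA erefl hIA) (dot_ac ha hb hc erefl hIB erefl hIB).
  rewrite /Qf /yb /zb /S; fs.
have Bs2 : dot (psub (ac A B C yb zb) (bary a (- b) c A B C)) (psub (ac A B C yb zb) (bary a (- b) c A B C))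
   = dot (psub (ac A B C yb zb) (bary a b (- c) A B C)) (psub (ac A B C yb zb) (bary a b (- c) A B C)).
  rewrite (dot_ac ha hb hc erefl hIB erefl hIB) (dot_ac ha hb hc erefl hIC erefl hIC).
  rewrite /Qf /yb /zb /S; fs.
have q1 : dot (psub Be (bary (- a) b c A B C)) (psub Be (bary (- a) b c A B C))
   = dot (psub Be (bary a (- b) c A B C)) (psub Be (bary a (- b) c A B C)).
  by have := congr1 (fun x => x^+2) hBe1; rewrite /= /dist !sqr_sqrtr ?dot_ge0.
have q2 : dot (psub Be (bary a (- b) c A B C)) (psub Be (bary a (- b) c A B C))
   = dot (psub Be (bary a b (- c) A B C)) (psub Be (bary a b (- c) A B C)).
  by have := congr1 (fun x => x^+2) hBe2; rewrite /= /dist !sqr_sqrtr ?dot_ge0.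
have hBe : Be = ac A B C yb zb.
  apply: (uniq_dot (perp_diff q1 Bs1) (perp_diff q2 Bs2)).
  rewrite (cross_ac hIA hIB hIB hIC) mulf_neq0 //.
  have -> : (b / (- a + b + c) - - b / (a + - b + c)) * (c / (a + - b + c) - - c / (a + b + - c)) -
     (c / (- a + b + c) - c / (a + - b + c)) * (- b / (a + - b + c) - b / (a + b + - c))
     = 4 * a * b * c / ((- a + b + c) * (a + - b + c) * (a + b + - c)) by fs.
  by rewrite !(mulf_neq0, invr_neq0) // pnatr_eq0.
have hTA : foot (bary (- a) b c A B C) B C = ac A B C ((a - b + c)/(2*a)) ((a + b - c)/(2*a)).
  rewrite (foot_ac _ (acB A B C) (acC A B C)).
  rewrite (dot_ac ha hb hc hIA (acB A B C) (acC A B C) (acB A B C)).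
  have -> : dot (psub C B) (psub C B) = a^+2 by rewrite ha /dot /psub /=; ring.
  rewrite /Qf; congr ac; fs.
have hTB : foot (bary a (- b) c A B C) C A = ac A B C 0 ((a + b - c)/(2*b)).
  rewrite (foot_ac _ (acC A B C) (acA A B C)).
  rewrite (dot_ac ha hb hc hIB (acC A B C) (acA A B C) (acC A B C)).
  have -> : dot (psub A C) (psub A C) = b^+2 by rewrite hb /dot /psub /=; ring.
  rewrite /Qf; congr ac; fs.
rewrite /on_line hTA in hN1; rewrite /on_line hTB in hN2.
pose N' := ac A B C ((a - b + c)/(a+b+c)) ((a + b - c)/(a+b+c)).
have n1 : cross (psub (ac A B C ((a - b + c)/(2*a)) ((a + b - c)/(2*a))) A) (psub N' A) = 0.
  rewrite (cross_ac erefl (acA A B C) erefl (acA A B C)); apply/eqP.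
  rewrite mulf_eq0; apply/orP; left; apply/eqP; fs.
have n2 : cross (psub (ac A B C 0 ((a + b - c)/(2*b))) B) (psub N' B) = 0.
  rewrite (cross_ac erefl (acB A B C) erefl (acB A B C)); apply/eqP.
  rewrite mulf_eq0; apply/orP; left; apply/eqP; fs.
have hN : N = N'.
  apply: (uniq_cross (cross_sub hN1 n1) (cross_sub hN2 n2)).
  rewrite (cross_ac erefl (acA A B C) erefl (acB A B C)) mulf_neq0 //.
  have -> : ((a - b + c) / (2 * a) - 0) * ((a + b - c) / (2 * b) - 0) -
       ((a + b - c) / (2 * a) - 0) * (0 - 1) = (a + b - c) * (a + b + c) / (4 * a * b) by fs.
  by rewrite !(mulf_neq0, invr_neq0) // pnatr_eq0.
have dIA : dot (psub (bary a b c A B C) A) (psub (bary a b c A B C) A) = b*c*(- a + b + c)/(a+b+c).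
  rewrite (dot_ac ha hb hc hI (acA A B C) hI (acA A B C)) /Qf; fs.
have dIB : dot (psub (bary a b c A B C) B) (psub (bary a b c A B C) B) = c*a*(a - b + c)/(a+b+c).
  rewrite (dot_ac ha hb hc hI (acB A B C) hI (acB A B C)) /Qf; fs.
have dIC : dot (psub (bary a b c A B C) C) (psub (bary a b c A B C) C) = a*b*(a + b - c)/(a+b+c).
  rewrite (dot_ac ha hb hc hI (acC A B C) hI (acC A B C)) /Qf; fs.
rewrite hBe hN.
rewrite (foot_ac _ (acA A B C) hI) (foot_ac _ (acB A B C) hI) (foot_ac _ (acC A B C) hI) dIA dIB dIC.
rewrite (dot_ac ha hb hc erefl (acA A B C) hI (acA A B C)).
rewrite (dot_ac ha hb hc erefl (acB A B C) hI (acB A B C)).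
rewrite (dot_ac ha hb hc erefl (acC A B C) hI (acC A B C)).
rewrite /is_orthocenter /N'.
split; rewrite (dot_ac ha hb hc erefl erefl erefl erefl) /Qf /yb /zb /S; fs.
Qed.
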